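(* Every quantifier-free formula in the first-order language of graphs has finite VC-dimension on the class $\mathcal J$ of all Johnson graphs; that is, for every quantifier-free formula $\varphi(\bar x;\bar y)$ with its free variables partitioned into tuples $\bar x,\bar y$, there is $N\in\mathbb N$ such that for every $G\in\mathcal J$ the set system $\big(V(G)^{|\bar x|},\{\{\bar a\mid G\models\varphi(\bar a,\bar b)\}\mid \bar b\in V(G)^{|\bar y|}\}\big)$ has VC-dimension at most $N$.
   Context: The first-order language of graphs has atomic formulas $Exy$ (adjacency) and $x=y$, closed under $\neg,\wedge,\vee$ and quantification over vertices; a formula is quantifier-free if it contains no quantifiers. For $m\ge k$ and a set $X$ with $|X|=m$, the Johnson graph $J(m,k)$ has as vertices the $k$-element subsets of $X$, two vertices adjacent iff their intersection has size $k-1$; $\mathcal J=\{J(m,k)\mid k,m\in\mathbb N, k\le m\}$. A set $A\subseteq U$ is shattered by a family $\mathcal S$ of subsets of $U$ if $\{A\cap S\mid S\in\mathcal S\}$ is the power set of $A$; the VC-dimension of $(U,\mathcal S)$ is the supremum of sizes of shattered subsets. *)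

(* Defs.v *)
From mathcomp Require Import ssreflect ssrfun ssrbool eqtype ssrnat seq choice fintype finfun finset.
Set Implicit Arguments. Unset Strict Implicit. Unset Printing Implicit Defensive.

(* First-order formulas of the language of graphs, with free variables
   indexed by 'I_n (n = number of free variables in scope).  The
   quantifiers bind a new variable, which gets index n in the body. *)
Inductive formula : nat -> Type :=
| FEdge n : 'I_n -> 'I_n -> formula n
| FEq   n : 'I_n -> 'I_n -> formula n
| FNeg  n : formula n -> formula n
| FAnd  n : formula n -> formula n -> formula n
| FOr   n : formula n -> formula n -> formula n
| FEx   n : formula n.+1 -> formula n
| FAll  n : formula n.+1 -> formula n.

Fixpoint quantifier_free n (f : formula n) : bool :=
  match f with
  | FEdge _ _ _ | FEq _ _ _ => true
  | FNeg _ g => quantifier_free g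
  | FAnd _ g h | FOr _ g h => quantifier_free g && quantifier_free h
  | FEx _ _ | FAll _ _ => false
  end.

Definition ext_env (V : Type) n (env : 'I_n -> V) (v : V) : 'I_n.+1 -> V :=
  fun i => match unlift ord_max i with Some j => env j | None => v end.

Fixpoint sat (V : finType) (E : rel V) n (f : formula n) : ('I_n -> V) -> bool :=
  match f in formula n return ('I_n -> V) -> bool with
  | FEdge _ i j => fun env => E (env i) (env j)
  | FEq _ i j => fun env => env i == env j
  | FNeg _ g => fun env => ~~ sat E g env
  | FAnd _ g h => fun env => sat E g env && sat E h env
  | FOr _ g h => fun env => sat E g env || sat E h env
  | FEx _ g => fun env => [exists v, sat E g (ext_env env v)]
  | FAll _ g => fun env => [forall v, sat E g (ext_env env v)]
  end.

(* joint assignment: x-variables are 0..p-1, y-variables are p..p+q-1 *)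
Definition join_env (V : Type) p q (a : 'I_p -> V) (b : 'I_q -> V) : 'I_(p + q) -> V :=
  fun i => match split i with inl j => a j | inr j => b j end.

Definition phi_family (V : finType) (E : rel V) p q (phi : formula (p + q))
  : {set {set {ffun 'I_p -> V}}} :=
  [set [set a : {ffun 'I_p -> V} | sat E phi (join_env a b) ]
     | b : {ffun 'I_q -> V}].

Definition shattered (U : finType) (A : {set U}) (S : {set {set U}}) : bool :=
  [set A :&: X | X in S] == powerset A.

Definition VCdim_le (U : finType) (S : {set {set U}}) (N : nat) : Prop :=
  forall A : {set U}, shattered A S -> #|A| <= N.

Definition johnson_vertex (m k : nat) : finType := {S : {set 'I_m} | #|S| == k}.

Definition johnson_adj (m k : nat) : rel (johnson_vertex m k) :=
  fun S T => #|val S :&: val T|.+1 == k.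

(* Main.v *)
Require Import Defs.
From mathcomp Require Import ssreflect ssrfun ssrbool eqtype ssrnat seq choice fintype finfun finset.
From mathcomp Require Import bigop div.
From mathcomp Require Import zify.

Lemma qf_sat_eq (V : finType) (E : rel V) n (f : formula n) : quantifier_free f ->
  forall env1 env2 : 'I_n -> V,
  (forall i j, (env1 i == env1 j) = (env2 i == env2 j)) ->
  (forall i j, E (env1 i) (env1 j) = E (env2 i) (env2 j)) ->
  sat E f env1 = sat E f env2.
Proof.
elim: f => //= {}n.
- by move=> g IH qg e1 e2 H1 H2; rewrite (IH qg e1 e2 H1 H2).
- by move=> g IHg h IHh /andP[qg qh] e1 e2 H1 H2; rewrite (IHg qg e1 e2 H1 H2) (IHh qh e1 e2 H1 H2).
- by move=> g IHg h IHh /andP[qg qh] e1 e2 H1 H2; rewrite (IHg qg e1 e2 H1 H2) (IHh qh e1 e2 H1 H2).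
Qed.

Lemma pow_le m e : 0 < e -> m ^ e <= e ^ e * 2 ^ m.
Proof.
move=> e0.
have h1 : m <= e * (m %/ e).+1 by rewrite mulnC; apply: ltnW; apply: ltn_ceil.
have h2 : (m %/ e).+1 <= 2 ^ (m %/ e) := ltn_expl _ (isT : 1 < 2).
have h3 : m <= e * 2 ^ (m %/ e) by apply: (leq_trans h1); rewrite leq_mul2l h2 orbT.
apply: (leq_trans (_ : _ <= (e * 2 ^ (m %/ e)) ^ e)); first by rewrite leq_exp2r.
rewrite expnMn leq_mul2l -expnM; apply/orP; right.
by apply: leq_pexp2l => //; apply: leq_divM.
Qed.

Lemma exp_poly c d : exists N, forall a, 2 ^ a <= c * (a + 1) ^ d -> a <= N.
Proof.
exists (d.+1 ^ d.+1 * 2 * c) => a H.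
rewrite addn1 in H.
have H1 := @pow_le a.+1 d.+1 (ltn0Sn d).
rewrite [2 ^ _]expnS in H1.
have H2 : a.+1 ^ d.+1 <= (d.+1 ^ d.+1 * 2 * c) * a.+1 ^ d.
  apply: (leq_trans H1); rewrite -!mulnA leq_mul2l; apply/orP; right.
  by rewrite leq_mul2l H orbT.
rewrite expnS leq_pmul2r ?expn_gt0 // in H2; exact: ltnW.
Qed.

Lemma card_imset_factor (T T1 T2 : finType) (f1 : T -> T1) (f2 : T -> T2) (D : {pred T}) :
  (forall x y, x \in D -> y \in D -> f1 x = f1 y -> f2 x = f2 y) ->
  #|f2 @: D| <= #|f1 @: D|.
Proof.
move=> H.
pose h y := omap f1 [pick x in D | f2 x == y].
have hinj : {in f2 @: D &, injective h}.
  move=> y1 y2 /imsetP[x1 x1D ->] /imsetP[x2 x2D ->]; rewrite /h.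
  case: pickP => [z1 /andP[z1D /eqP e1]|/(_ x1)]; last by rewrite x1D eqxx.
  case: pickP => [z2 /andP[z2D /eqP e2]|/(_ x2)]; last by rewrite x2D eqxx.
  by move=> /= [] /(H _ _ z1D z2D); rewrite e1 e2.
rewrite -(card_in_imset hinj).
apply: (leq_trans _ (leq_imset_card (@Some T1) (f1 @: D))).
apply: subset_leq_card; apply/subsetP => o /imsetP[y /imsetP[x xD ->] ->].
rewrite /h; case: pickP => [z /andP[zD _]|/(_ x)]; last by rewrite xD eqxx.
by apply/imsetP; exists (f1 z) => //; apply/imsetP; exists z.
Qed.

Lemma card_bigcup_le (I T : finType) (P : pred I) (F : I -> {set T}) :
  #|\bigcup_(i | P i) F i| <= \sum_(i | P i) #|F i|.
Proof.
elim/big_rec2: _ => [|i X s _ IH]; first by rewrite cards0. apply: (leq_trans (leq_card_setU _ _)).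
by rewrite leq_add2l.
Qed.

Lemma traces_le (V : finType) (E : rel V) p q (phi : formula (p + q))
  (qf : quantifier_free phi) (A : {set {ffun 'I_p -> V}}) (W : {set V}) :
  (forall a i, a \in A -> a i \in W) ->
  #|[set A :&: [set a : {ffun 'I_p -> V} | sat E phi (join_env a b)] | b : {ffun 'I_q -> V}]| <=
   #|[set ([set w in W | w == v], [set w in W | E w v], [set w in W | E v w]) | v : V]| ^ q
   * 4 ^ (q * q).
Proof.
move=> AW.
set ty := fun v : V => ([set w in W | w == v], [set w in W | E w v], [set w in W | E v w]).
set Ty := [set ty v | v : V].
pose code (b : {ffun 'I_q -> V}) :=
  ([ffun j => ty (b j)], [ffun jj : 'I_q * 'I_q => (b jj.1 == b jj.2, E (b jj.1) (b jj.2))]).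
apply: (leq_trans (@card_imset_factor _ _ _ code _ _ _)).
  move=> b b' _ _ [] /ffunP e1 /ffunP e2.
  apply/setP => a; rewrite !inE; case aA: (a \in A) => //=.
  apply: qf_sat_eq => // i j; rewrite /join_env;
  case: (split i) => i'; case: (split j) => j' //.
  + have := e1 j'; rewrite !ffunE /ty => -[] /setP /(_ (a i')) h _ _.
    by move: h; rewrite !inE AW.
  + have := e1 i'; rewrite !ffunE /ty => -[] /setP /(_ (a j')) h _ _.
    by move: h; rewrite !inE AW //= eq_sym => ->; rewrite eq_sym.
  + by have := e2 (i', j'); rewrite !ffunE => -[] ->.
  + have := e1 j'; rewrite !ffunE /ty => -[] _ /setP /(_ (a i')) h _.
    by move: h; rewrite !inE AW.
  + have := e1 i'; rewrite !ffunE /ty => -[] _ _ /setP /(_ (a j')) h.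
    by move: h; rewrite !inE AW.
  + by have := e2 (i', j'); rewrite !ffunE => -[] _ ->.
have sub : [set code b | b : {ffun 'I_q -> V}] \subset setX [set g in ffun_on Ty] setT.
  apply/subsetP => c /imsetP[b _ ->]; rewrite !inE andbT.
  by apply/ffun_onP => j; rewrite ffunE; apply/imsetP; exists (b j).
apply: (leq_trans (subset_leq_card sub)).
rewrite cardsX cardsE card_ffun_on cardsT card_ffun card_ord !card_prod card_ord card_bool.
by [].
Qed.

Lemma card_inter_id (T : finType) (S S0 X : {set T}) :
  #|S :&: X| + #|S :&: (S0 :\: X)| = #|S :&: S0| + #|S :&: (X :\: S0)|.
Proof.
have h1 := cardsID S0 (S :&: X).
have h2 := cardsID X (S :&: S0).
have e1 : S :&: X :&: S0 = S :&: S0 :&: X by rewrite setIAC.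
have e2 : S :&: X :\: S0 = S :&: (X :\: S0) by rewrite setIDA.
have e3 : S :&: S0 :\: X = S :&: (S0 :\: X) by rewrite setIDA.
rewrite e1 e2 in h1; rewrite e3 in h2.
lia.
Qed.

Lemma cardsI1 (T : finType) (S : {set T}) e : #|S :&: [set e]| = (e \in S).
Proof.
case: (boolP (e \in S)) => h.
  have -> : S :&: [set e] = [set e].
    by apply/setP => x; rewrite !inE; case: (x =P e) => [->|]; rewrite ?h ?andbT ?andbF.
  by rewrite cards1.
have -> : S :&: [set e] = set0.
  by apply/setP => x; rewrite !inE; case: (x =P e) => [->|]; rewrite ?(negbTE h) ?andbT ?andbF.
by rewrite cards0.
Qed.

Lemma johnson_sym m k (S T : johnson_vertex m k) : johnson_adj S T = johnson_adj T S.
Proof. by rewrite /johnson_adj setIC. Qed.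

Lemma johnson_nb_le m k (W : {set johnson_vertex m k}) :
  #|[set [set w in W | johnson_adj w v] | v : johnson_vertex m k]| <=
  1 + #|W| * ((1 + #|W| * (#|W| * 2)) * (1 + #|W| * (#|W| * 2))).
Proof.
pose J := johnson_vertex m k.
have cardJ : forall S : J, #|val S| = k by move=> S; apply/eqP; exact: (valP S).
pose rel0 (S0 S : J) := k <= #|val S :&: val S0| + 2.
pose G' := \bigcup_(S0 in W) \bigcup_(S in W | rel0 S0 S) (val S0 :\: val S).
pose H' := \bigcup_(S0 in W) \bigcup_(S in W | rel0 S0 S) (val S :\: val S0).
pose isF (o : option 'I_m) (S : J) := if o is Some f then f \in val S else false.
pose isE (o : option 'I_m) (S : J) := if o is Some e then e \in val S else true.
pose g (x : J * option 'I_m * option 'I_m) :=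
  [set S in W | rel0 x.1.1 S && ((#|val S :&: val x.1.1| + isF x.2 S).+1 == k + isE x.1.2 S)].
pose OG := None |: (Some @: G').
pose OH := None |: (Some @: H').
pose Dom := setX (setX W OG) OH.
have key : forall T : J, [set w in W | johnson_adj w T] \in set0 |: (g @: Dom).
  move=> T; case: (set_0Vmem [set w in W | johnson_adj w T]) => [-> | [S0]].
    by rewrite !inE eqxx.
  rewrite inE => /andP[S0W adj0].
  rewrite /johnson_adj in adj0.
  have hS0 := cardJ S0; have hT := cardJ T.
  have c1 := cardsID (val T) (val S0).
  have c2 := cardsID (val S0) (val T).
  rewrite setIC in c2.
  have d1 : #|val S0 :\: val T| == 1 by apply/eqP; lia.
  have d2 : #|val T :\: val S0| == 1 by apply/eqP; lia.
  case/cards1P: d1 => e de; case/cards1P: d2 => f df.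
  have eS0 : e \in val S0.
    have : e \in val S0 :\: val T by rewrite de set11.
    by rewrite inE => /andP[].
  have fS0 : f \notin val S0.
    have : f \in val T :\: val S0 by rewrite df set11.
    by rewrite inE => /andP[].
  have ident : forall S : J, #|val S :&: val T| + (e \in val S) = #|val S :&: val S0| + (f \in val S).
    by move=> S; rewrite -!cardsI1 -de -df card_inter_id.
  rewrite inE; apply/orP; right.
  apply/imsetP; exists (S0, (if e \in G' then Some e else None), (if f \in H' then Some f else None)).
    rewrite !inE S0W /=; apply/andP; split.
      by case: ifP => h //=; apply/imsetP; exists e.
    by case: ifP => h //=; apply/imsetP; exists f.
  apply/setP => S; rewrite !inE /=; case SW: (S \in W) => //=.
  rewrite /johnson_adj.
  have := ident S.
  case r: (rel0 S0 S) => /=; last first.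
    move: r; rewrite /rel0 => r id.
    have : f \in val S <= 1 by apply: leq_b1.
    move=> hf; apply/negbTE/negP => /eqP h; move/negbT: r; rewrite -ltnNge; move: hf h id; move: (f \in val S) (e \in val S) (#|val S :&: val T|) (#|val S :&: val S0|) => x1 x2 x3 x4; lia.
  have hE : isE (if e \in G' then Some e else None) S = (e \in val S).
    case: ifP => //= eG; apply/esym/negbFE/negP => eS.
    move/negP: eG; apply; apply/bigcupP; exists S0 => //; apply/bigcupP; exists S.
      by rewrite SW.
    by rewrite inE eS0 andbT; apply/negP.
  have hF : isF (if f \in H' then Some f else None) S = (f \in val S).
    case: ifP => //= fH; apply/esym/negP => fS.
    move/negP: fH; apply; apply/bigcupP; exists S0 => //; apply/bigcupP; exists S.
      by rewrite SW.
    by rewrite inE fS fS0.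
  rewrite hE hF => id.
  rewrite -[(_ .+1 == k)](eqn_add2r (e \in val S)).
  by rewrite addSn id.
have sub : [set [set w in W | johnson_adj w v] | v : J] \subset set0 |: (g @: Dom).
  by apply/subsetP => X /imsetP[T _ ->]; exact: key.
apply: (leq_trans (subset_leq_card sub)).
rewrite cardsU1; apply: leq_add; first exact: leq_b1.
apply: (leq_trans (leq_imset_card _ _)).
have bG : #|G'| <= #|W| * (#|W| * 2).
  apply: (leq_trans (card_bigcup_le _ _ _ _)).
  rewrite -sum_nat_const; apply: leq_sum => S0 S0W.
  apply: (leq_trans (card_bigcup_le _ _ _ _)).
  rewrite -sum_nat_const big_mkcondr /=; apply: leq_sum => S SW.
  case: ifP => // r; move: r; rewrite /rel0 => r.
  have := cardsID (val S) (val S0); rewrite cardJ setIC; move: r; move: (#|val S :&: val S0|) (#|val S0 :\: val S|) => x y; lia.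
have bH : #|H'| <= #|W| * (#|W| * 2).
  apply: (leq_trans (card_bigcup_le _ _ _ _)).
  rewrite -sum_nat_const; apply: leq_sum => S0 S0W.
  apply: (leq_trans (card_bigcup_le _ _ _ _)).
  rewrite -sum_nat_const big_mkcondr /=; apply: leq_sum => S SW.
  case: ifP => // r; move: r; rewrite /rel0 => r.
  have := cardsID (val S0) (val S); rewrite cardJ; move: r; move: (#|val S :&: val S0|) (#|val S :\: val S0|) => x y; lia.
have bOG : #|OG| <= 1 + #|W| * (#|W| * 2).
  rewrite cardsU1; apply: leq_add; first exact: leq_b1.
  exact: (leq_trans (leq_imset_card _ _) bG).
have bOH : #|OH| <= 1 + #|W| * (#|W| * 2).
  rewrite cardsU1; apply: leq_add; first exact: leq_b1.
  exact: (leq_trans (leq_imset_card _ _) bH).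
rewrite !cardsX -mulnA leq_mul2l; apply/orP; right.
exact: leq_mul.
Qed.

Lemma poly_bound n z : n <= z -> 0 < z ->
  (1 + n) * (1 + n * ((1 + n * (n * 2)) * (1 + n * (n * 2)))) * (1 + n * ((1 + n * (n * 2)) * (1 + n * (n * 2)))) <= (4 * z) ^ 13.
Proof.
move=> nz z0.
have -> : (4 * z) ^ 13 = (4 * z) * (4 * z) ^ 6 * (4 * z) ^ 6 by rewrite -expnS -expnD.
have [Z eZ] : exists Z, Z = 4 * z by exists (4 * z).
rewrite -eZ.
have Z2 : 2 <= Z by lia.
have h1 : 1 + n <= Z by lia.
have h2 : 1 + n * (n * 2) <= Z * Z.
  have : n * n <= z * z by apply: leq_mul.
  nia.
have h4 : (1 + n * (n * 2)) * (1 + n * (n * 2)) <= (Z * Z) * (Z * Z) by apply: leq_mul.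
have h5 : n * ((1 + n * (n * 2)) * (1 + n * (n * 2))) <= Z * ((Z * Z) * (Z * Z)).
  apply: leq_mul => //; lia.
have h3 : 1 + n * ((1 + n * (n * 2)) * (1 + n * (n * 2))) <= Z ^ 6.
  have -> : Z ^ 6 = Z * (Z * ((Z * Z) * (Z * Z))).
    by rewrite !expnS expn0 muln1 !mulnA.
  have Y0 : 0 < Z * (Z * Z * (Z * Z)) by rewrite !muln_gt0; lia.
  move: h5 Y0; move: (Z * (Z * Z * (Z * Z))) => Y h5 Y0.
  have : 2 * Y <= Z * Y by rewrite leq_mul2r Z2 orbT.
  move: (n * _) h5 => X h5.
  lia.
by apply: leq_mul => //; apply: leq_mul.
Qed.

Theorem mainTheorem9 :
  forall (p q : nat) (phi : formula (p + q)),
    quantifier_free phi ->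
    exists N : nat, forall m k : nat, k <= m ->
      VCdim_le (phi_family (@johnson_adj m k) phi) N.
Proof.
move=> p q phi qf.
have [N HN] := exp_poly ((4 * (p + 1)) ^ (13 * q) * 4 ^ (q * q)) (13 * q).
exists N => m k _ A /eqP sh; apply: HN.
pose E := @johnson_adj m k.
pose W := [set (x : {ffun 'I_p -> johnson_vertex m k} * 'I_p).1 x.2 | x in setX A [set: 'I_p]].
have AW : forall a i, a \in A -> a i \in W.
  by move=> a i aA; apply/imsetP; exists (a, i) => //; rewrite !inE aA.
have cW : #|W| <= #|A| * p.
  by apply: (leq_trans (leq_imset_card _ _)); rewrite cardsX cardsT card_ord.
have e2 : 2 ^ #|A| = #|[set A :&: [set a : {ffun 'I_p -> johnson_vertex m k} | sat E phi (join_env a b)]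
                      | b : {ffun 'I_q -> johnson_vertex m k}]|.
  by rewrite -card_powerset -sh /phi_family -imset_comp.
rewrite e2; apply: (leq_trans (@traces_le _ E _ _ phi qf A W AW)).
set n := #|W|.
pose B := 1 + n * ((1 + n * (n * 2)) * (1 + n * (n * 2))).
have hTy : #|[set ([set w in W | w == v], [set w in W | E w v], [set w in W | E v w]) | v : johnson_vertex m k]|
    <= (1 + n) * B * B.
  pose EQ := [set [set w in W | w == v] | v : johnson_vertex m k].
  pose NB := [set [set w in W | E w v] | v : johnson_vertex m k].
  have sub : [set ([set w in W | w == v], [set w in W | E w v], [set w in W | E v w]) | v : johnson_vertex m k]
    \subset setX (setX EQ NB) NB.
    apply/subsetP => x /imsetP[v _ ->]; rewrite !inE; apply/andP; split; first (apply/andP; split).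
    - by apply/imsetP; exists v.
    - by apply/imsetP; exists v.
    - apply/imsetP; exists v => //; apply/setP => w; rewrite !inE /E johnson_sym.
      by [].
  apply: (leq_trans (subset_leq_card sub)); rewrite !cardsX.
  have hNB : #|NB| <= B by apply: johnson_nb_le.
  have hEQ : #|EQ| <= 1 + n.
    have sub2 : EQ \subset set0 |: [set [set w] | w in W].
      apply/subsetP => X /imsetP[v _ ->]; rewrite !inE.
      case vW: (v \in W).
        apply/orP; right; apply/imsetP; exists v => //.
        by apply/setP => w; rewrite !inE; case: (w =P v) => [->|]; rewrite ?vW ?andbT ?andbF.
      apply/orP; left; apply/eqP/setP => w; rewrite !inE; case: (w =P v) => [->|]; by rewrite ?vW ?andbT ?andbF.
    apply: (leq_trans (subset_leq_card sub2)); rewrite cardsU1; apply: leq_add; first exact: leq_b1.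
    exact: leq_imset_card.
  by apply: leq_mul => //; apply: leq_mul.
have hp : (1 + n) * B * B <= (4 * ((p + 1) * (#|A| + 1))) ^ 13.
  apply: poly_bound; last by rewrite muln_gt0 !addn1.
  apply: (leq_trans cW); rewrite mulnC; apply: leq_mul; lia.
apply: (leq_trans (_ : _ <= ((4 * ((p + 1) * (#|A| + 1))) ^ 13) ^ q * 4 ^ (q * q))).
  rewrite leq_mul2r; apply/orP; right.
  case: (posnP q) => [->|q0]; first by rewrite !expn0.
  by rewrite leq_exp2r //; apply: (leq_trans hTy).
rewrite -expnM mulnA expnMn [X in _ <= X]mulnC !mulnA.
by rewrite [(4 * (p + 1)) ^ _ * _]mulnC.

Qed.
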